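(* Let $\pi$ be a smooth, positive probability density on the torus $\mathbb{T}^d$ and $\gamma$ a smooth vector field on $\mathbb{T}^d$ with $\nabla\cdot(\pi\gamma)=0$. Let $\Phi_{\Delta t}:\mathbb{T}^d\to\mathbb{T}^d$ be a numerical flow for $\dot x=\gamma(x)$ with $\Phi_{\Delta t}(x)=x+\gamma(x)\Delta t+K_1(x,\Delta t)\Delta t^2$, where $K_1$ is bounded uniformly on $\mathbb{T}^d$ for $\Delta t$ small, and suppose there exist $\Delta t_0>0$ and $L>0$ with $|\Phi_{\Delta t}(z_1)-\Phi_{\Delta t}(z_2)|\le L|z_1-z_2|$ for all $z_1,z_2$ and all $\Delta t<\Delta t_0$. Let $(\xi_n)$ be i.i.d. $\mathcal{N}(0,I)$ and define, with the same noise and $\widetilde{Z}_0=\widetilde{Y}_0=x$, $$\widetilde{Z}_{n+1}=\Phi_{\Delta t}(\widetilde{Z}_n)+\nabla\log\pi(\Phi_{\Delta t}(\widetilde{Z}_n))\Delta t+\sqrt{2\Delta t}\,\xi_n,\qquad \widetilde{Y}_{n+1}=\widetilde{Y}_n+\nabla\log\pi(\widetilde{Y}_n)\Delta t+\gamma(\widetilde{Y}_n)\Delta t+\sqrt{2\Delta t}\,\xi_n.$$ Then for $t=n\Delta t$ there exists a constant $C(t)>0$ independent of $\Delta t$ such that $\mathbb{E}_x|\widetilde{Y}_n-\widetilde{Z}_n|\le C(t)\Delta t$ for $\Delta t$ sufficiently small.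
   Context: $\widetilde{Z}_n$ is the unadjusted (non-Metropolised) Lie–Trotter splitting scheme and $\widetilde{Y}_n$ is the Euler–Maruyama discretisation of $dY_t=(\nabla\log\pi(Y_t)+\gamma(Y_t))dt+\sqrt2\,dW_t$. $\mathbb{E}_x$ denotes expectation with both chains started at $x$. *)

(* Defs.v *)
From HB Require Import structures.
From mathcomp Require Import all_boot all_order all_algebra.
From mathcomp Require Import all_classical all_reals all_analysis.
Set Implicit Arguments. Unset Strict Implicit. Unset Printing Implicit Defensive.
Import Order.TTheory GRing.Theory Num.Theory.
Import numFieldNormedType.Exports.
Local Open Scope classical_set_scope.
Local Open Scope ring_scope.

Section Defs.
Context {R : realType} {d : nat}.
Notation V := 'rV[R]_d.

Definition ev (i : 'I_d) : V := \row_j (j == i)%:R.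

Definition intvec (k : V) : Prop := forall i, exists z : int, k ord0 i = z%:~R.

Definition eunorm (v : V) : R := Num.sqrt (\sum_i v ord0 i ^+ 2).

(* distance on the torus T^d = R^d / Z^d, between the classes of x and y *)
Definition tdist (x y : V) : R :=
  inf [set eunorm (x - y - k) | k in [set k | intvec k]].

(* Z^d-zperiodic scalar function (= function on T^d) *)
Definition zperiodic (f : V -> R) : Prop :=
  forall x k, intvec k -> f (x + k) = f x.

Fixpoint ipartial (f : V -> R) (l : seq 'I_d) : V -> R :=
  if l is i :: l' then (fun x => 'D_(ev i) (ipartial f l') x) else f.

Definition smooth (f : V -> R) : Prop :=
  forall l, continuous (ipartial f l) /\
            forall i x, derivable (ipartial f l) x (ev i).

Definition grad_log (f : V -> R) (x : V) : V :=
  \row_i 'D_(ev i) (fun y => ln (f y)) x.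

Definition div_prod (f : V -> R) (g : V -> V) (x : V) : R :=
  \sum_i 'D_(ev i) (fun y => f y * g y ord0 i) x.

Fixpoint cube_int (n : nat) (g : (nat -> R) -> R) : R :=
  match n with
  | 0 => g (fun _ => 0)
  | n'.+1 => Rintegral lebesgue_measure `[0, 1]
      (fun t => cube_int n' (fun c => g (fun j => if j == n' then t else c j)))
  end.

Definition torus_prob_density (p : V -> R) : Prop :=
  cube_int d (fun c => p (\row_i c (nat_of_ord i))) = 1.

(* the lifted numerical flow Phi_dt is a well-defined map of T^d *)
Definition torus_map (F : V -> V) : Prop :=
  forall x k, intvec k -> intvec (F (x + k) - F x).

(* Lie--Trotter scheme Z~ and Euler--Maruyama scheme Y~, driven by the same
   noise xi : nat -> T -> R^d, both started at x, computed on lifts in R^d *)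
Fixpoint Zscheme {Om : Type} (Phi : R -> V -> V) (p : V -> R) (xi : nat -> Om -> V)
    (dt : R) (x : V) (n : nat) (w : Om) : V :=
  match n with
  | 0 => x
  | n'.+1 => let z := Phi dt (Zscheme Phi p xi dt x n' w) in
             z + dt *: grad_log p z + Num.sqrt (2 * dt) *: xi n' w
  end.

Fixpoint Yscheme {Om : Type} (g : V -> V) (p : V -> R) (xi : nat -> Om -> V)
    (dt : R) (x : V) (n : nat) (w : Om) : V :=
  match n with
  | 0 => x
  | n'.+1 => let y := Yscheme g p xi dt x n' w in
             y + dt *: grad_log p y + dt *: g y + Num.sqrt (2 * dt) *: xi n' w
  end.

End Defs.

Definition mutually_independent {dT : measure_display} {T : measurableType dT}
    {R : realType} {I : Type} (P : probability T R) (X : I -> {RV P >-> R}) : Prop :=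
  forall (k : nat) (idx : 'I_k -> I) (B : 'I_k -> set R),
    injective idx -> (forall j, measurable (B j)) ->
    P (\bigcap_(j in [set: 'I_k]) (X (idx j) @^-1` B j)) =
    (\prod_(j < k) P (X (idx j) @^-1` B j))%E.

Definition std_normal {dT : measure_display} {T : measurableType dT}
    {R : realType} (P : probability T R) (X : {RV P >-> R}) : Prop :=
  forall B : set R, measurable B -> P (X @^-1` B) = normal_prob 0 1 B.
Arguments mutually_independent {dT T R I} P X.
Arguments std_normal {dT T R} P X.

(* Main.v *)
Require Import Defs.
From HB Require Import structures.
From mathcomp Require Import all_boot all_order all_algebra.
From mathcomp Require Import all_classical all_reals all_analysis.
From mathcomp Require Import lra ring.
Import Order.TTheory GRing.Theory Num.Theory.
Import numFieldNormedType.Exports.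
Local Open Scope classical_set_scope.
Local Open Scope ring_scope.
Set Implicit Arguments. Unset Strict Implicit. Unset Printing Implicit Defensive.
Section L.
Context {R : realType} {d : nat}.
Notation V := 'rV[R]_d.

Lemma entry_le_norm (v : V) i : `|v ord0 i| <= `|v|.
Proof.
have -> : `|v| = mx_norm v by [].
rewrite mx_normrE.
exact: (le_bigmax _ (fun ij : 'I_1 * 'I_d => `|v ij.1 ij.2|) (ord0, i)).
Qed.

Lemma norm_le_entries (v : V) c : 0 <= c -> (forall i, `|v ord0 i| <= c) -> `|v| <= c.
Proof.
move=> c0 H; have -> : `|v| = mx_norm v by [].
rewrite mx_normrE.
apply: bigmax_le => // -[a b] _ /=; rewrite (ord1 a); exact: H.
Qed.

Lemma zperiodic_D (f : V -> R) v : zperiodic f -> zperiodic (fun x => 'D_v f x).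
Proof.
move=> pf x k hk /=; rewrite /derive /=.
have E : (fun h : R => h^-1 *: (f (h *: v + (x + k)) - f (x + k))) =
         (fun h : R => h^-1 *: (f (h *: v + x) - f x)).
  apply: boolp.funext => h /=; rewrite addrA (pf _ _ hk) (pf _ _ hk) //.
by rewrite E.
Qed.

Lemma zperiodic_ipartial (f : V -> R) l : zperiodic f -> zperiodic (ipartial f l).
Proof.
move=> pf; elim: l => [|i l IH] //=.
exact: (zperiodic_D _ IH).
Qed.

Lemma cont_per_bounded (f : V -> R) : continuous f -> zperiodic f ->
  exists B, forall x, `|f x| <= B.
Proof.
move=> cf pf.
pose K := [set v : V | forall i, `[(0:R), 1]%classic (v ord0 i)].
have cK : compact K := rV_compact (fun i => @segment_compact R 0 1).
have K0 : K !=set0 by exists 0 => i /=; rewrite mxE in_itv /= lexx ler01.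
have cfK : {within K, continuous f} by apply: continuous_subspaceT.
have [c1 Kc1 H1] := compact_EVT_max K0 cK cfK.
have [c2 Kc2 H2] := compact_EVT_min K0 cK cfK.
exists (`|f c1| + `|f c2|) => x.
pose k : V := \row_i ((Num.floor (x ord0 i))%:~R : R).
have hk : intvec k by move=> i; exists (Num.floor (x ord0 i)); rewrite mxE.
have Kx : (x - k) \in K.
  rewrite inE => i /=; rewrite !mxE in_itv /=; apply/andP; split.
    by rewrite subr_ge0 floor_le.
  have := floorD1_gt (x ord0 i); rewrite intrD => h.
  by rewrite lerBlDr addrC ltW.
have -> : f x = f (x - k) by rewrite -[in LHS](subrK k x) (pf _ _ hk).
have := H1 _ Kx; have := H2 _ Kx.
have := ler_norm (f c1); have := ler_norm (- f c2); rewrite normrN.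
rewrite ler_norml; move=> a1 a2 a3 a4.
have a5 := normr_ge0 (f c1); have a6 := normr_ge0 (f c2).
apply/andP; split.
  rewrite opprD; apply: (le_trans _ a3); apply: (@le_trans _ _ (- `|f c2|)).
    by rewrite gerDr oppr_le0.
  by rewrite lerNl.
by apply: (le_trans a4); apply: (le_trans a2); rewrite lerDl.
Qed.

Lemma dir1 (f : V -> R) v x s : derivable f (s *: v + x) v ->
  is_derive s 1 (fun h : R => f (h *: v + x)) ('D_v f (s *: v + x)).
Proof.
move=> H.
have E : (fun h : R => h^-1 *: (((fun h : R => f (h *: v + x)) \o shift s) (h *: 1)
              - f (s *: v + x))) =
         (fun h : R => h^-1 *: ((f \o shift (s *: v + x)) (h *: v) - f (s *: v + x))).
  apply: boolp.funext => h /=; rewrite /shift.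
  by rewrite -[h *: (1:R)]/(h * 1) mulr1 scalerDl addrA.
split.
  by rewrite /derivable /= E.
by rewrite /derive /= E.
Qed.

Lemma mvt_dir (f : V -> R) v x s B : (forall y, derivable f y v) ->
  (forall y, `|'D_v f y| <= B) -> `|f (s *: v + x) - f x| <= B * `|s|.
Proof.
move=> Hd HB.
pose g := fun h : R => f (h *: v + x).
have g0 : g 0 = f x by rewrite /g scale0r add0r.
have dg : forall h : R, is_derive h (1:R) g ('D_v f (h *: v + x)) by move=> h; apply: dir1.
have dg' : forall h : R, derivable g h (1:R) by move=> h; have [] := dg h.
have cg : continuous g.
  by move=> h; apply: differentiable_continuous; apply/derivable1_diffP.
have B0 : 0 <= B by apply: le_trans (HB x); exact: normr_ge0.
case: (ltrgtP s 0) => [sl0|sg0|->].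
- have [c _ Hc] := @MVT R g (fun h => 'D_v f (h *: v + x)) s 0 sl0
     (fun h _ => dg h) (continuous_subspaceT cg).
  rewrite -/(g s) -g0 distrC Hc normrM sub0r normrN.
  by apply: ler_wpM2r => //; exact: normr_ge0.
- have [c _ Hc] := @MVT R g (fun h => 'D_v f (h *: v + x)) 0 s sg0
     (fun h _ => dg h) (continuous_subspaceT cg).
  rewrite -/(g s) -g0 Hc normrM subr0.
  by apply: ler_wpM2r => //; exact: normr_ge0.
- by rewrite scale0r add0r subrr !normr0 mulr0.
Qed.

Lemma lip_of (f : V -> R) : (forall j y, derivable f y (ev j)) ->
  (forall j, continuous (fun x => 'D_(ev j) f x)) -> zperiodic f ->
  exists L, 0 <= L /\ forall y z, `|f y - f z| <= L * `|y - z|.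
Proof.
move=> Hd Hc pf.
have hb : forall j, exists B, forall x, `|'D_(ev j) f x| <= B :=
  fun j => cont_per_bounded (Hc j) (zperiodic_D (ev j) pf).
have [Bf HBf] := boolp.choice hb.
pose B := Order.max 0 (\big[Order.max/0]_j Bf j).
have B0 : 0 <= B by rewrite le_max lexx.
have HB : forall j x, `|'D_(ev j) f x| <= B.
  move=> j x; apply: (le_trans (HBf j x)); apply: (le_trans (le_bigmax _ Bf j)).
  by rewrite le_max; apply/orP; right.
exists (d%:R * B); split; first by rewrite mulr_ge0.
move=> y z.
pose u (m : nat) : V := \row_i (if (i < m)%N then y ord0 i else z ord0 i).
have key : forall m, (m <= d)%N -> `|f (u m) - f z| <= m%:R * B * `|y - z|.
  elim=> [_|m IH hm].
    have -> : u 0%N = z by apply/rowP => i; rewrite !mxE.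
    by rewrite subrr normr0 mul0r mul0r.
  pose j : 'I_d := Ordinal hm.
  have E : u m.+1 = ((y - z) ord0 j) *: ev j + u m.
    apply/rowP => i; rewrite !mxE.
    case: (ltngtP i m) => him.
    - have -> : (i == j) = false by apply/negbTE; rewrite neq_ltn him.
      by rewrite ltnS ltnW // mulr0 add0r.
    - have -> : (i == j) = false by apply/negbTE; rewrite neq_ltn him orbT.
      by rewrite ltnS leqNgt him mulr0 add0r.
    - have -> : (i == j) by apply/eqP/val_inj.
      rewrite him ltnS leqnn.
      have -> : j = i by apply/val_inj.
      by rewrite mulr1 subrK.
  have h1 := mvt_dir (u m) ((y - z) ord0 j) (Hd j) (HB j).
  rewrite -E in h1.
  have h2 := IH (ltnW hm).
  have h3 := entry_le_norm (y - z) j.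
  rewrite -(subrKA (f (u m))).
  apply: (le_trans (ler_normD _ _)).
  rewrite -nat1r mulrDl mul1r mulrDl.
  apply: lerD => //.
  by apply: (le_trans h1); apply: ler_wpM2l.

by have := key d (leqnn d); have -> : u d = y by apply/rowP => i; rewrite !mxE ltn_ord.
Qed.

Lemma dirE (f : V -> R) v x s :
  'D_v f (s *: v + x) = 'D_1 (fun h : R => f (h *: v + x)) s.
Proof.
have E : (fun h : R => h^-1 *: (((fun h : R => f (h *: v + x)) \o shift s) (h *: 1)
              - f (s *: v + x))) =
         (fun h : R => h^-1 *: ((f \o shift (s *: v + x)) (h *: v) - f (s *: v + x))).
  apply: boolp.funext => h /=; rewrite /shift.
  by rewrite -[h *: (1:R)]/(h * 1) mulr1 scalerDl addrA.
by rewrite /derive /= E.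
Qed.

Lemma D_ln (p : V -> R) x v : (forall y, 0 < p y) -> derivable p x v ->
  'D_v (fun y => ln (p y)) x = 'D_v p x / p x.
Proof.
move=> pp H.
have H' : derivable p (0 *: v + x) v by rewrite scale0r add0r.
have dg := dir1 H'.
rewrite -{1}(add0r x) -(scale0r v) dirE.
rewrite -[in RHS](add0r x) -(scale0r v) -(@derive_val _ _ _ _ _ _ _ dg).
rewrite -derive1E.
have -> : (fun h : R => ln (p (h *: v + x))) = (@ln R) \o (fun h : R => p (h *: v + x)) by [].
have dl := is_derive1_ln (pp (0 *: v + x)).
rewrite derive1_comp.
- rewrite derive1E (@derive_val _ _ _ _ _ _ _ dl) mulrC derive1E //.
- by have [] := dg.
- by have [] := dl.
Qed.

Lemma lip_mod (f : V -> R) L : zperiodic f -> (forall y z, `|f y - f z| <= L * `|y - z|) ->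
  forall y z k, intvec k -> `|f y - f z| <= L * `|y - z - k|.
Proof.
move=> pf H y z k hk.
have -> : f y = f (y - k) by rewrite -[in LHS](subrK k y) (pf _ _ hk).
by rewrite addrAC; apply: H.
Qed.

Lemma smooth_lip (f : V -> R) l : smooth f -> zperiodic f ->
  exists L, 0 <= L /\ forall y z k, intvec k ->
    `|ipartial f l y - ipartial f l z| <= L * `|y - z - k|.
Proof.
move=> sf pf.
have pl := zperiodic_ipartial l pf.
have [L [L0 HL]] : exists L, 0 <= L /\ forall y z,
    `|ipartial f l y - ipartial f l z| <= L * `|y - z|.
  apply: lip_of => //.
  - by move=> j y; exact: (sf l).2.
  - by move=> j; exact: (sf (j :: l)).1.
exists L; split => //; exact: lip_mod.
Qed.

Lemma smooth_bound (f : V -> R) l : smooth f -> zperiodic f ->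
  exists B, forall x, `|ipartial f l x| <= B.
Proof.
move=> sf pf; apply: cont_per_bounded; first exact: (sf l).1.
exact: zperiodic_ipartial.
Qed.

Lemma vec_lip (F : V -> V) : (forall i, exists L, 0 <= L /\ forall y z k, intvec k ->
    `|F y ord0 i - F z ord0 i| <= L * `|y - z - k|) ->
  exists L, 0 <= L /\ forall y z k, intvec k -> `|F y - F z| <= L * `|y - z - k|.
Proof.
move=> H; have [Lf HLf] := boolp.choice H.
pose L := Order.max 0 (\big[Order.max/0]_j Lf j).
have L0 : 0 <= L by rewrite le_max lexx.
exists L; split => // y z k hk.
apply: norm_le_entries; first by apply: mulr_ge0.
move=> i; rewrite !mxE; apply: (le_trans ((HLf i).2 y z k hk)).
apply: ler_wpM2r; first exact: normr_ge0.
apply: (le_trans (le_bigmax _ Lf i)).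
by rewrite le_max; apply/orP; right.
Qed.

Lemma vec_bound (F : V -> V) : (forall i, exists B, forall x, `|F x ord0 i| <= B) ->
  exists B, forall x, `|F x| <= B.
Proof.
move=> H; have [Bf HBf] := boolp.choice H.
pose B := Order.max 0 (\big[Order.max/0]_j Bf j).
have B0 : 0 <= B by rewrite le_max lexx.
exists B => x; apply: norm_le_entries => // i.
apply: (le_trans (HBf i x)); apply: (le_trans (le_bigmax _ Bf i)).
by rewrite le_max; apply/orP; right.
Qed.

Lemma quot_bound (ay az py pz A Bi La Lp e : R) : py != 0 -> pz != 0 ->
  `|py^-1| <= Bi -> `|pz^-1| <= Bi -> `|az| <= A -> `|ay - az| <= La * e ->
  `|py - pz| <= Lp * e -> `|ay / py - az / pz| <= (La * Bi + A * Lp * Bi ^+ 2) * e.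
Proof.
move=> py0 pz0 hy hz ha h1 h2.
have E : ay / py - az / pz = (ay - az) * py^-1 + az * ((pz - py) * (py^-1 * pz^-1)).
  by field; rewrite pz0 py0.
rewrite E; apply: (le_trans (ler_normD _ _)); rewrite !normrM.
have -> : (La * Bi + A * Lp * Bi ^+ 2) * e = La * e * Bi + A * ((Lp * e) * (Bi * Bi)).
  by ring.
apply: lerD.
  by apply: ler_pM; rewrite ?mulr_ge0 ?normr_ge0.
apply: ler_pM; rewrite ?mulr_ge0 ?normr_ge0 //.
apply: ler_pM; rewrite ?mulr_ge0 ?normr_ge0 ?(distrC pz) //.
by apply: ler_pM; rewrite ?normr_ge0.
Qed.

Lemma gradlog_lip (p : V -> R) : smooth p -> zperiodic p -> (forall x, 0 < p x) ->
  exists L, 0 <= L /\ forall y z k, intvec k ->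
    `|grad_log p y - grad_log p z| <= L * `|y - z - k|.
Proof.
move=> sp pp pos; apply: vec_lip => i.
have [La [La0 HLa]] := smooth_lip [:: i] sp pp.
have [Lp [Lp0 HLp]] := smooth_lip [::] sp pp.
have [A HA] := smooth_bound [:: i] sp pp.
have [Bi HBi] : exists Bi, forall x, `|(p x)^-1| <= Bi.
  apply: (@cont_per_bounded (fun x => (p x)^-1)).
    move=> x; apply: continuousV; first by rewrite gt_eqF.
    exact: (sp [::]).1.
  by move=> x k hk /=; rewrite pp.
have A0 : 0 <= A by apply: le_trans (HA 0); exact: normr_ge0.
have Bi0 : 0 <= Bi by apply: le_trans (HBi 0); exact: normr_ge0.
exists (La * Bi + A * Lp * Bi ^+ 2); split.
  by apply: addr_ge0; apply: mulr_ge0 => //; [apply: mulr_ge0|apply: exprn_ge0].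
move=> y z k hk; rewrite !mxE.
rewrite !D_ln //; try exact: (sp [::]).2.
apply: quot_bound; rewrite ?gt_eqF //.
- exact: (HA z).
- exact: (HLa y z k hk).
- exact: (HLp y z k hk).
Qed.

Lemma entry_le_eunorm (v : V) i : `|v ord0 i| <= eunorm v.
Proof.
rewrite /eunorm -sqrtr_sqr ler_sqrt; last by apply: sumr_ge0 => j _; exact: sqr_ge0.
rewrite (bigD1 i) //= lerDl; apply: sumr_ge0 => j _; exact: sqr_ge0.
Qed.

Lemma eunorm_le (v : V) : eunorm v <= d%:R * `|v|.
Proof.
have n0 : 0 <= d%:R * `|v| by apply: mulr_ge0; [exact: ler0n | exact: normr_ge0].
rewrite /eunorm -(ger0_norm n0) -sqrtr_sqr ler_sqrt; last exact: sqr_ge0.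
apply: (@le_trans _ _ (\sum_(i < d) `|v| ^+ 2)).
  apply: ler_sum => i _; rewrite -real_normK; last exact: num_real.
  by rewrite lerXn2r ?nnegrE ?normr_ge0 // entry_le_norm.
rewrite sumr_const card_ord -(mulr_natl (`|v| ^+ 2) d) exprMn.
apply: ler_wpM2r; first exact: sqr_ge0.
by rewrite -natrX ler_nat; case: d => // n; rewrite expnS leq_pmulr.
Qed.

Lemma eunorm_ge0 (v : V) : 0 <= eunorm v.
Proof. exact: sqrtr_ge0. Qed.

Lemma tdist_le (x y k : V) : intvec k -> tdist x y <= eunorm (x - y - k).
Proof.
move=> hk; rewrite /tdist.
have hl : has_lbound [set eunorm (x - y - k) | k in [set k | intvec k]].
  by exists 0 => _ [k' _ <-]; exact: eunorm_ge0.
by apply: (ge_inf hl); exists k.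
Qed.

Lemma intvecB (k j : V) : intvec k -> intvec j -> intvec (k - j).
Proof.
move=> hk hj i; have [a ha] := hk i; have [b hb] := hj i.
by exists (a - b); rewrite !mxE ha hb intrB.
Qed.

Lemma intvec0 : intvec (0 : V).
Proof. by move=> i; exists 0; rewrite mxE. Qed.

Lemma scal (e M Lg Lc G dt : R) (m : nat) : 0 < dt -> dt <= 1 -> 0 <= M -> 0 <= Lg ->
  0 <= Lc -> 0 <= G -> 0 <= e ->
  e <= m%:R * (M + Lg * G + Lg * M) * dt ^+ 2 * (1 + (Lc + Lg) * dt) ^+ m ->
  e + dt * (Lc * e) + dt ^+ 2 * M + dt * (Lg * (e + dt * G + dt ^+ 2 * M)) <=
  m.+1%:R * (M + Lg * G + Lg * M) * dt ^+ 2 * (1 + (Lc + Lg) * dt) ^+ m.+1.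
Proof.
move=> dt0 dt1 M0 Lg0 Lc0 G0 e0 he.
set A := M + Lg * G + Lg * M.
set u := 1 + (Lc + Lg) * dt.
set Q := u ^+ m.
have A0 : 0 <= A by rewrite /A ?addr_ge0 ?mulr_ge0.
have u1 : 1 <= u by rewrite /u lerDl mulr_ge0 ?addr_ge0 // ltW.
have Q1 : 1 <= Q := exprn_ege1 m u1.
have uQ : 1 <= u * Q by rewrite -exprS; apply: exprn_ege1.
have h1 : dt * (Lg * (dt ^+ 2 * M)) <= dt ^+ 2 * (Lg * M).
  have -> : dt * (Lg * (dt ^+ 2 * M)) = dt * (dt ^+ 2 * (Lg * M)) by ring.
  rewrite -[X in _ <= X]mul1r; apply: ler_wpM2r => //; apply: mulr_ge0; [exact: sqr_ge0 | exact: mulr_ge0].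
have h2 : u * e <= u * (m%:R * A * dt ^+ 2 * Q).
  by apply: ler_wpM2l => //; apply: le_trans u1.
have h3 : A * dt ^+ 2 <= A * dt ^+ 2 * (u * Q).
  rewrite -[X in X <= _]mulr1; apply: ler_wpM2l => //; apply: mulr_ge0 => //; exact: sqr_ge0.
have -> : e + dt * (Lc * e) + dt ^+ 2 * M + dt * (Lg * (e + dt * G + dt ^+ 2 * M)) =
  u * e + dt ^+ 2 * (M + Lg * G) + dt * (Lg * (dt ^+ 2 * M)) by rewrite /u; ring.
have -> : m.+1%:R * A * dt ^+ 2 * u ^+ m.+1 =
  u * (m%:R * A * dt ^+ 2 * Q) + A * dt ^+ 2 * (u * Q).
  by rewrite /Q (exprS u m) -natr1; ring.
rewrite /A in h2 h3 *; lra.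
Qed.

Lemma pathwise {Om : Type} (p : V -> R) (gam : V -> V) (Phi : R -> V -> V)
  (xi : nat -> Om -> V) (K1 : V -> R -> V) (M Lg Lc G dt : R) (x : V) (w : Om) :
  0 < dt -> dt <= 1 ->
  (forall z, intvec (Phi dt z - (z + dt *: gam z + dt ^+ 2 *: K1 z dt))) ->
  (forall z, `|K1 z dt| <= M) -> 0 <= M -> 0 <= Lg -> 0 <= Lc -> 0 <= G ->
  (forall y z k, intvec k -> `|grad_log p y - grad_log p z| <= Lg * `|y - z - k|) ->
  (forall y z k, intvec k -> `|gam y - gam z| <= Lc * `|y - z - k|) ->
  (forall y, `|gam y| <= G) ->
  forall m, exists k, intvec k /\
    `|Yscheme gam p xi dt x m w - Zscheme Phi p xi dt x m w - k| <=
    m%:R * (M + Lg * G + Lg * M) * dt ^+ 2 * (1 + (Lc + Lg) * dt) ^+ m.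
Proof.
move=> dt0 dt1 HK HM M0 Lg0 Lc0 G0 HLg HLc HG.
elim=> [|m [k [hk IH]]].
  exists 0; split; first exact: intvec0.
  by rewrite /= subrr subr0 normr0 mul0r !mul0r.
set Y := Yscheme gam p xi dt x m w.
set Z := Zscheme Phi p xi dt x m w.
set Zp := Phi dt Z.
set j := Zp - (Z + dt *: gam Z + dt ^+ 2 *: K1 Z dt).
have hj : intvec j := HK Z.
exists (k - j); split; first exact: intvecB.
have -> : Yscheme gam p xi dt x m.+1 w - Zscheme Phi p xi dt x m.+1 w - (k - j) =
   (Y - Z - k) + dt *: (gam Y - gam Z) - dt ^+ 2 *: K1 Z dt
   + dt *: (grad_log p Y - grad_log p Zp).
  by apply/rowP => i; rewrite /= -/Y -/Z -/Zp /j !mxE; ring.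
have hW : Y - Zp - (k - j) = (Y - Z - k) - dt *: gam Z - dt ^+ 2 *: K1 Z dt.
  by apply/rowP => i; rewrite /j !mxE; ring.
have b1 := HLc Y Z k hk.
have b2 := HLg Y Zp (k - j) (intvecB hk hj); rewrite hW in b2.
have ndt : `|dt| = dt by rewrite gtr0_norm.
have ndt2 : `|dt ^+ 2| = dt ^+ 2 by rewrite normrX ndt.
have b3 : `|Y - Z - k - dt *: gam Z - dt ^+ 2 *: K1 Z dt| <=
          `|Y - Z - k| + dt * G + dt ^+ 2 * M.
  apply: (le_trans (ler_normB _ _)); rewrite normrZ ndt2.
  apply: lerD; last by apply: ler_wpM2l => //; exact: sqr_ge0.
  apply: (le_trans (ler_normB _ _)); rewrite normrZ ndt.
  by apply: lerD => //; apply: ler_wpM2l => //; apply: ltW.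
apply: le_trans; last first.
  apply: (scal dt0 dt1 M0 Lg0 Lc0 G0 (normr_ge0 _) IH).
apply: (le_trans (ler_normD _ _)); rewrite normrZ ndt.
apply: lerD; last first.
  apply: ler_wpM2l; first exact: ltW.
  apply: (le_trans b2); apply: ler_wpM2l => //.
apply: (le_trans (ler_normB _ _)); rewrite normrZ ndt2.
apply: lerD; last by apply: ler_wpM2l => //; exact: sqr_ge0.
apply: (le_trans (ler_normD _ _)); rewrite normrZ ndt.
by apply: lerD => //; apply: ler_wpM2l => //; apply: ltW.
Qed.
End L.

Lemma int_le (dT : measure_display) (T : measurableType dT) (R : realType)
  (P : probability T R) (f : T -> R) c :
  (forall w, 0 <= f w) -> (forall w, f w <= c) -> (\int[P]_w (f w)%:E <= c%:E)%E.
Proof.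
move=> f0 fc.
have -> : (c%:E = \int[P]_w (cst c%:E) w)%E.
  rewrite integral_cst //; transitivity (c%:E * 1)%E; first by rewrite mule1.
  by congr (_ * _)%E; exact: (esym (probability_setT P)).
have c0 : 0 <= c by apply: le_trans (fc point).
rewrite (@ge0_integralTE _ _ _ P (fun w => (f w)%:E)); last by move=> w; rewrite lee_fin.
rewrite (@ge0_integralTE _ _ _ P (cst c%:E)); last by move=> w; rewrite /= lee_fin.
apply: le_ereal_sup => _ [h hf <-]; exists h => //= w.
apply: le_trans (hf w) _; by rewrite lee_fin.
Qed.

Unset Implicit Arguments.
Theorem lemmaC1 (R : realType) (d : nat)
    (p : 'rV[R]_d -> R) (gam : 'rV[R]_d -> 'rV[R]_d) (Phi : R -> 'rV[R]_d -> 'rV[R]_d)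
    (dT : measure_display) (T : measurableType dT) (P : probability T R)
    (xi : nat -> 'I_d -> {RV P >-> R}) :
  (* pi: smooth positive probability density on T^d *)
  smooth p -> zperiodic p -> (forall x, 0 < p x) -> torus_prob_density p ->
  (* gamma: smooth vector field on T^d with div(pi gamma) = 0 *)
  (forall i, smooth (fun x => gam x ord0 i)) ->
  (forall i, zperiodic (fun x => gam x ord0 i)) ->
  (forall x, div_prod p gam x = 0) ->
  (* Phi_dt : T^d -> T^d, Phi_dt(x) = x + gamma(x) dt + K1(x,dt) dt^2 with K1 bounded *)
  (forall dt, torus_map (Phi dt)) ->
  (exists K1 : 'rV[R]_d -> R -> 'rV[R]_d, exists dt1 : R, exists M : R,
     0 < dt1 /\
     (forall x dt, 0 < dt < dt1 ->
        intvec (Phi dt x - (x + dt *: gam x + dt ^+ 2 *: K1 x dt))) /\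
     (forall x dt, 0 < dt < dt1 -> eunorm (K1 x dt) <= M)) ->
  (* uniform Lipschitz bound on T^d *)
  (exists dt0 L : R, 0 < dt0 /\ 0 < L /\
     forall dt, 0 < dt < dt0 -> forall z1 z2,
       tdist (Phi dt z1) (Phi dt z2) <= L * tdist z1 z2) ->
  (* xi_n i.i.d. N(0, I_d): all coordinates independent standard normals *)
  mutually_independent P (fun ni : nat * 'I_d => xi ni.1 ni.2) ->
  (forall n i, std_normal P (xi n i)) ->
  forall t : R, 0 <= t ->
  exists C : R, 0 < C /\ exists delta : R, 0 < delta /\
    forall (x : 'rV[R]_d) (dt : R) (n : nat), 0 < dt < delta -> n%:R * dt = t ->
      let xiv := fun m w => \row_i (xi m i w) in
      (\int[P]_w (tdist (Yscheme gam p xiv dt x n w)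
                        (Zscheme Phi p xiv dt x n w))%:E <= (C * dt)%:E)%E.
Proof.
move=> sp pp pos _ sg pg _ _ [K1 [dt1 [M [dt10 [HK HM]]]]] _ _ _ t t0.
have [Lg [Lg0 HLg]] := gradlog_lip sp pp pos.
have [Lc [Lc0 HLc]] : exists L, 0 <= L /\ forall y z k, intvec k ->
    `|gam y - gam z| <= L * `|y - z - k|.
  by apply: vec_lip => i; exact: (smooth_lip [::] (sg i) (pg i)).
have [G HG] : exists G, forall y, `|gam y| <= G.
  by apply: vec_bound => i; exact: (smooth_bound [::] (sg i) (pg i)).
have G0 : 0 <= G by apply: le_trans (HG 0); exact: normr_ge0.
have M0 : 0 <= M.
  have h : 0 < dt1 / 2 < dt1 by apply/andP; split; lra.
  by apply: le_trans (HM 0 _ h); exact: eunorm_ge0.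
set A := M + Lg * G + Lg * M.
set c := Lc + Lg.
have A0 : 0 <= A by rewrite /A ?addr_ge0 ?mulr_ge0.
have c0 : 0 <= c by rewrite /c addr_ge0.
have X0 : 0 <= d%:R * t * A * expR (c * t) by rewrite !mulr_ge0 ?ler0n ?expR_ge0.
exists (d%:R * t * A * expR (c * t) + 1); split; first by lra.
exists (Order.min dt1 1); split; first by rewrite lt_min dt10 ltr01.
move=> x dt n /andP [dt0 dtlt] hn /=.
move: dtlt; rewrite lt_min => /andP [dtd1 dtl1].
have dtI : 0 < dt < dt1 by rewrite dt0 dtd1.
apply: int_le.
  move=> w; rewrite /tdist; apply: lb_le_inf.
    by exists (eunorm (Yscheme gam p (fun m w => \row_i xi m i w) dt x n w -
       Zscheme Phi p (fun m w => \row_i xi m i w) dt x n w - 0)), 0 => //; exact: intvec0.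
  by move=> _ [k _ <-]; exact: eunorm_ge0.
move=> w.
have HK' : forall z, intvec (Phi dt z - (z + dt *: gam z + dt ^+ 2 *: K1 z dt)).
  by move=> z; exact: HK.
have HM' : forall z, `|K1 z dt| <= M.
  move=> z; apply: norm_le_entries => // i.
  exact: le_trans (entry_le_eunorm _ i) (HM z dt dtI).
have [k [hk H]] := pathwise (fun m w => \row_i xi m i w) x w dt0 (ltW dtl1) HK' HM' M0
   Lg0 Lc0 G0 HLg HLc HG n.
apply: le_trans (tdist_le _ _ hk) _.
apply: le_trans (eunorm_le _) _.
apply: (le_trans (ler_wpM2l (ler0n _ d) H)).
have hq : (1 + c * dt) ^+ n <= expR (c * t).
  have -> : c * t = n%:R * (c * dt) by rewrite -hn; ring.
  rewrite expRM_natl; apply: lerXn2r.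
  - by rewrite nnegrE addr_ge0 // mulr_ge0 // ltW.
  - by rewrite nnegrE expR_ge0.
  - exact: expR_ge1Dx.
have h2 : n%:R * A * dt ^+ 2 * (1 + c * dt) ^+ n <= t * A * expR (c * t) * dt.
  have -> : t * A * expR (c * t) * dt = n%:R * A * dt ^+ 2 * expR (c * t) by rewrite -hn; ring.
  apply: ler_wpM2l => //; apply: mulr_ge0; [apply: mulr_ge0 => //; exact: ler0n | exact: sqr_ge0].
have h3 := ler_wpM2l (ler0n _ d) h2.
have -> : (d%:R * t * A * expR (c * t) + 1) * dt = d%:R * (t * A * expR (c * t) * dt) + dt by ring.
by rewrite /c /A in h3 *; lra.
Qed.
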